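(* Let $\{A_\nu\mid\nu\in\Lambda\}$ be a family of locally $C^{\ast}$-algebras. The Cartesian product $A=\prod_{\nu\in\Lambda}A_\nu$ with the product topology is an annihilator algebra if and only if every $A_\nu$ is an annihilator algebra.
   Context: Locally $C^{\ast}$-algebra: complete Hausdorff locally convex ${}^{\ast}$-algebra over $\mathbb{C}$ with jointly continuous multiplication, topology given by $C^{\ast}$-seminorms. Annihilator algebra: for every closed left ideal $J$ and closed right ideal $K$, $\mathrm{ran}(J)=0\iff J=A$ and $\mathrm{lan}(K)=0\iff K=A$, where $\mathrm{lan},\mathrm{ran}$ are left/right annihilators. *)

(* Defs.v *)
From HB Require Import structures.
From mathcomp Require Import all_boot all_order all_algebra.
From mathcomp Require Import complex reals.
Set Implicit Arguments. Unset Strict Implicit. Unset Printing Implicit Defensive.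
Import Order.TTheory GRing.Theory Num.Theory.
Local Open Scope ring_scope.

(* Raw data of a topological *-algebra over C = R[i] whose topology is
   generated by a family of seminorms [sn i], i : idx. *)
Record alg_data (R : realType) := AlgData {
  car  : Type;
  zero : car;
  add  : car -> car -> car;
  opp  : car -> car;
  scal : R[i] -> car -> car;
  mul  : car -> car -> car;
  star : car -> car;
  idx  : Type;
  sn   : idx -> car -> R }.
Arguments car {R} a.  Arguments zero {R} a.  Arguments add {R} a _ _.
Arguments opp {R} a _.  Arguments scal {R} a _ _.  Arguments mul {R} a _ _.
Arguments star {R} a _.  Arguments idx {R} a.  Arguments sn {R} a _ _.

Section LCstar.
Variable R : realType.
Variable A : alg_data R.
Local Notation X := (car A).
Local Notation "0A" := (zero A).
Local Notation "x |+| y" := (add A x y) (at level 50, left associativity).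
Local Notation "|-| x" := (opp A x) (at level 35).
Local Notation "x |-| y" := (add A x (opp A y)) (at level 50, left associativity).
Local Notation "a *:: x" := (scal A a x) (at level 40).
Local Notation "x |*| y" := (mul A x y) (at level 40, left associativity).

Definition directed (D : Type) (le : D -> D -> Prop) :=
  [/\ (forall d, le d d), (forall a b c, le a b -> le b c -> le a c),
      inhabited D & (forall a b, exists c, le a c /\ le b c)].

Definition cauchy_net (D : Type) (le : D -> D -> Prop) (x : D -> X) :=
  forall (i : idx A) (eps : R), 0 < eps -> exists d0, forall d1 d2,
    le d0 d1 -> le d0 d2 -> sn A i (x d1 |-| x d2) < eps.

Definition net_converges (D : Type) (le : D -> D -> Prop) (x : D -> X) (a : X) :=
  forall (i : idx A) (eps : R), 0 < eps -> exists d0, forall d,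
    le d0 d -> sn A i (x d |-| a) < eps.

Definition is_locally_Cstar : Prop :=
      (forall x y z, x |+| (y |+| z) = (x |+| y) |+| z)/\
      (forall x y, x |+| y = y |+| x)/\
      (forall x, x |+| 0A = x)/\
      (forall x, x |+| (|-| x) = 0A)/\
      (forall (a b : R[i]) x, a *:: (b *:: x) = (a * b) *:: x)/\
      (forall x, 1 *:: x = x)/\
      (forall (a b : R[i]) x, (a + b) *:: x = (a *:: x) |+| (b *:: x))/\
      (forall a x y, a *:: (x |+| y) = (a *:: x) |+| (a *:: y)) /\
      (forall x y z, x |*| (y |*| z) = (x |*| y) |*| z)/\
      (forall x y z, x |*| (y |+| z) = (x |*| y) |+| (x |*| z))/\
      (forall x y z, (x |+| y) |*| z = (x |*| z) |+| (y |*| z))/\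
      (forall a x y, a *:: (x |*| y) = (a *:: x) |*| y)/\
      (forall a x y, a *:: (x |*| y) = x |*| (a *:: y)) /\
      (forall x, star A (star A x) = x)/\
      (forall x y, star A (x |+| y) = star A x |+| star A y)/\
      (forall a x, star A (a *:: x) = conjc a *:: star A x)/\
      (forall x y, star A (x |*| y) = star A y |*| star A x) /\
      (forall i x, 0 <= sn A i x)/\
      (forall i x y, sn A i (x |+| y) <= sn A i x + sn A i y)/\
      (forall i a x, sn A i (a *:: x) = Normc.normc a * sn A i x)/\
      (forall i x y, sn A i (x |*| y) <= sn A i x * sn A i y)/\
      (forall i x, sn A i (star A x |*| x) = sn A i x ^+ 2) /\
      (forall x, (forall i, sn A i x = 0) -> x = 0A) /\
      (forall (D : Type) (le : D -> D -> Prop) (x : D -> X),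
         directed le -> cauchy_net le x -> exists a, net_converges le x a)
   .

Definition closed_set (S : X -> Prop) : Prop :=
  forall x, (forall (n : nat) (F : nat -> idx A) (eps : R), 0 < eps ->
     exists y, S y /\ (forall k, (k < n)%N -> sn A (F k) (x |-| y) < eps)) -> S x.

Definition subspace (S : X -> Prop) :=
  [/\ S 0A, (forall x y, S x -> S y -> S (x |+| y)) &
      (forall a x, S x -> S (a *:: x))].

Definition left_ideal (J : X -> Prop) :=
  subspace J /\ (forall a x, J x -> J (a |*| x)).
Definition right_ideal (K : X -> Prop) :=
  subspace K /\ (forall a x, K x -> K (x |*| a)).

Definition lan (S : X -> Prop) : X -> Prop := fun x => forall s, S s -> x |*| s = 0A.
Definition ran (S : X -> Prop) : X -> Prop := fun x => forall s, S s -> s |*| x = 0A.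

Definition is_zero_set (S : X -> Prop) := forall x, S x <-> x = 0A.
Definition is_full_set (S : X -> Prop) := forall x, S x.

Definition annihilator_algebra : Prop :=
  (forall J, left_ideal J -> closed_set J -> (is_zero_set (ran J) <-> is_full_set J)) /\
  (forall K, right_ideal K -> closed_set K -> (is_zero_set (lan K) <-> is_full_set K)).
End LCstar.

(* Cartesian product with the product topology, i.e. the topology generated
   by the seminorms x |-> p (x nu), p a seminorm of A nu. *)
Definition prod_alg (R : realType) (L : Type) (A : L -> alg_data R) : alg_data R :=
  @AlgData R (forall nu, car (A nu))
    (fun nu => zero (A nu))
    (fun x y nu => add (A nu) (x nu) (y nu))
    (fun x nu => opp (A nu) (x nu))
    (fun a x nu => scal (A nu) a (x nu))
    (fun x y nu => mul (A nu) (x nu) (y nu))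
    (fun x nu => star (A nu) (x nu))
    {nu : L & idx (A nu)}
    (fun i x => sn (A (projT1 i)) (projT2 i) (x (projT1 i))).

(* Main.v *)
Require Import Defs.
From mathcomp Require Import all_boot all_order all_algebra complex reals.
From Stdlib Require Import ClassicalEpsilon ProofIrrelevance FunctionalExtensionality Classical.
Import GRing.Theory Num.Theory.
Local Open Scope ring_scope.
Set Implicit Arguments. Unset Strict Implicit.

Record good (R : realType) (A : alg_data R) : Prop := Good {
  g_mul0 : forall a, Defs.mul A a (Defs.zero A) = Defs.zero A;
  g_0mul : forall a, Defs.mul A (Defs.zero A) a = Defs.zero A;
  g_faith : forall x, (forall a, Defs.mul A a x = Defs.zero A) -> x = Defs.zero A;
  g_assoc : forall x y z, Defs.mul A x (Defs.mul A y z) = Defs.mul A (Defs.mul A x y) z;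
  g_addr0 : forall x, Defs.add A x (Defs.zero A) = x;
  g_addrN : forall x, Defs.add A x (Defs.opp A x) = Defs.zero A;
  g_addA : forall x y z, Defs.add A x (Defs.add A y z) = Defs.add A (Defs.add A x y) z;
  g_addC : forall x y, Defs.add A x y = Defs.add A y x;
  g_scal0 : forall c, Defs.scal A c (Defs.zero A) = Defs.zero A;
  g_sn0 : forall i, Defs.sn A i (Defs.zero A) = 0 }.

Definition opA (R : realType) (A : alg_data R) : alg_data R :=
  @AlgData R (car A) (Defs.zero A) (Defs.add A) (Defs.opp A) (Defs.scal A) (fun x y => Defs.mul A y x)
    (Defs.star A) (idx A) (Defs.sn A).

Lemma good_lc_aux (R : realType) (A : alg_data R) : @is_locally_Cstar R A ->
  good A /\ good (opA A).
Proof.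
move=> [aA [aC [a0 [aN [sA [s1 [sDl [sDr [mA [mDr [mDl [mZl [mZr [ssK [sD [sZ
  [sM [sn0 [snD [snZ [snM [snC [H _]]]]]]]]]]]]]]]]]]]]]]].
have canc u : Defs.add A u u = u -> u = Defs.zero A.
  by move=> h; rewrite -[LHS]a0 -(aN u) aA h.
have mul0 a : Defs.mul A a (Defs.zero A) = Defs.zero A by apply: canc; rewrite -mDr a0.
have mul0' a : Defs.mul A (Defs.zero A) a = Defs.zero A by apply: canc; rewrite -mDl a0.
have scal0 c : Defs.scal A c (Defs.zero A) = Defs.zero A by apply: canc; rewrite -sDr a0.
have st0 : Defs.star A (Defs.zero A) = Defs.zero A by apply: canc; rewrite -sD a0.
have nc0 : Normc.normc (0 : R[i]) = 0.
  by rewrite /Normc.normc /= expr0n /= addr0 sqrtr0.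
have snz i : Defs.sn A i (Defs.zero A) = 0 by rewrite -(scal0 0) snZ nc0 mul0r.
have key y : Defs.mul A (Defs.star A y) y = Defs.zero A -> y = Defs.zero A.
  move=> hy; apply: H => i.
  have h := snC i y; rewrite hy snz in h.
  have : Defs.sn A i y ^+ 2 == 0 by rewrite -h.
  by rewrite sqrf_eq0 => /eqP.
have addA' x y z : Defs.add A x (Defs.add A y z) = Defs.add A (Defs.add A x y) z by apply: aA.
split; split => //.
- by move=> x hx; apply: key; apply: hx.
- move=> x hx; have : Defs.star A x = Defs.zero A.
    by apply: key; rewrite ssK; apply: hx.
  by move=> h; rewrite -(ssK x) h st0.
- by move=> x y z; rewrite /= mA.
Qed.

Definition ein (L : Type) (T : L -> Type) (z : forall m, T m) (n : L) (a : T n) :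
  forall m, T m := fun m =>
  match excluded_middle_informative (n = m) with
  | left h => eq_rect n T a m h
  | right _ => z m end.

Lemma ein_same L T z n a : @ein L T z n a n = a.
Proof.
rewrite /ein; case: excluded_middle_informative => [h|h]; last by case: h.
by rewrite (proof_irrelevance _ h erefl).
Qed.

Lemma ein_other L T z n a m : n <> m -> @ein L T z n a m = z m.
Proof. by rewrite /ein; case: excluded_middle_informative. Qed.

Lemma good_prod (R : realType) (L : Type) (A : L -> alg_data R) :
  (forall nu, good (A nu)) -> good (prod_alg A).
Proof.
move=> G; split => /=.
- by move=> a; apply: functional_extensionality_dep => nu; apply: g_mul0.
- by move=> a; apply: functional_extensionality_dep => nu; apply: g_0mul.
- move=> x hx; apply: functional_extensionality_dep => m.
  apply: (g_faith (G m)) => b.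
  have := f_equal (fun f => f m) (hx (ein (fun nu => Defs.zero (A nu)) b)).
  by rewrite /= ein_same.
- by move=> x y z; apply: functional_extensionality_dep => nu; apply: g_assoc.
- by move=> x; apply: functional_extensionality_dep => nu; apply: g_addr0.
- by move=> x; apply: functional_extensionality_dep => nu; apply: g_addrN.
- by move=> x y z; apply: functional_extensionality_dep => nu; apply: g_addA.
- by move=> x y; apply: functional_extensionality_dep => nu; apply: g_addC.
- by move=> c; apply: functional_extensionality_dep => nu; apply: g_scal0.
- by move=> i; apply: g_sn0.
Qed.

Lemma g_addKr (R : realType) (A : alg_data R) (G : good A) u v :
  Defs.add A u (Defs.add A v (Defs.opp A u)) = v.
Proof.
by rewrite (g_addC G) -(g_addA G) (g_addC G (Defs.opp A u)) (g_addrN G) (g_addr0 G).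
Qed.

Definition leftP (R : realType) (A : alg_data R) :=
  forall J, @left_ideal R A J -> closed_set J -> (is_zero_set (ran J) <-> is_full_set J).
Definition leftP' (R : realType) (A : alg_data R) :=
  forall J, @left_ideal R A J -> closed_set J -> is_zero_set (ran J) -> is_full_set J.

Lemma leftP_iff (R : realType) (A : alg_data R) : good A -> (leftP A <-> leftP' A).
Proof.
move=> G; split=> H J hl hc; first by move=> hz; apply/(H J hl hc).
split; first by apply: H.
move=> hf x; split.
- by move=> hx; apply: (g_faith G) => a; apply: hx.
- by move=> -> s _; apply: (g_mul0 G).
Qed.

Section Main.
Variables (R : realType) (L : Type) (A : L -> alg_data R).
Hypothesis G : forall nu, good (A nu).
Let P := prod_alg A.
Let z : forall nu, car (A nu) := fun nu => Defs.zero (A nu).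

Lemma part1 : (forall nu, leftP' (A nu)) -> leftP' P.
Proof.
move=> HA J [[J0 JD JZ] JM] Jc Jr.
have e0 nu : ein z (Defs.zero (A nu)) = z.
  apply: functional_extensionality_dep => m.
  by case: (classic (nu = m)) => [<-|h]; [rewrite ein_same | rewrite ein_other].
have key : forall nu (a : car (A nu)), J (ein z a : car P).
  move=> nu; pose J' := fun a : car (A nu) => J (ein z a : car P).
  apply: (HA nu J').
  - split; [split|].
    + by rewrite /J' e0.
    + move=> x y hx hy; rewrite /J'.
      have -> : ein z (Defs.add (A nu) x y) = Defs.add P (ein z x) (ein z y).
        apply: functional_extensionality_dep => m.
        case: (classic (nu = m)) => [<-|h]; first by rewrite /= !ein_same.
        by rewrite /= !ein_other // /z (g_addr0 (G m)).
      by apply: JD.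
    + move=> c x hx; rewrite /J'.
      have -> : ein z (Defs.scal (A nu) c x) = Defs.scal P c (ein z x).
        apply: functional_extensionality_dep => m.
        case: (classic (nu = m)) => [<-|h]; first by rewrite /= !ein_same.
        by rewrite /= !ein_other // /z (g_scal0 (G m)).
      by apply: JZ.
    + move=> b x hx; rewrite /J'.
      have -> : ein z (Defs.mul (A nu) b x) = Defs.mul P (ein z b) (ein z x).
        apply: functional_extensionality_dep => m.
        case: (classic (nu = m)) => [<-|h]; first by rewrite /= !ein_same.
        by rewrite /= !ein_other // /z (g_mul0 (G m)).
      by apply: JM.
  - move=> a Ha; rewrite /J'; apply: Jc => n F eps heps.
    case: (classic (inhabited (idx (A nu)))) => [[d]|ni].
    + pose Gk k := match excluded_middle_informative (projT1 (F k) = nu) with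
         | left h => eq_rect _ (fun m => idx (A m)) (projT2 (F k)) nu h
         | right _ => d end.
      have [y [Jy hy]] := Ha n Gk eps heps.
      exists (ein z y); split => // k hk.
      move: (hy k hk); rewrite /Gk.
      case: (F k) => m i /=; case: excluded_middle_informative => [h|h].
      * by subst m; rewrite !ein_same.
      * rewrite !ein_other; try by apply: nesym.
        by move=> _; rewrite /z (g_addrN (G m)) (g_sn0 (G m)).
    + exists z; split; first exact: J0.
      move=> k hk; move: (F k) => [m i] /=.
      case: (classic (nu = m)) => [e|hne].
        by exfalso; apply: ni; rewrite e; exact: (inhabits i).
      by rewrite ein_other // /z (g_addrN (G m)) (g_sn0 (G m)).
  - move=> b; split; last first.
      by move=> -> s _; apply: (g_mul0 (G nu)).
    move=> hb.
    have : ein z b = z.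
      apply/(Jr (ein z b : car P)) => x hx.
      have hxb : Defs.mul (A nu) (x nu) b = Defs.zero (A nu).
        apply: (g_faith (G nu)) => a; rewrite (g_assoc (G nu)); apply: hb.
        rewrite /J'.
        have -> : ein z (Defs.mul (A nu) a (x nu)) = Defs.mul P (ein z a) x.
          apply: functional_extensionality_dep => m.
          case: (classic (nu = m)) => [<-|h]; first by rewrite /= !ein_same.
          by rewrite /= !ein_other // /z (g_0mul (G m)).
        by apply: JM.
      apply: functional_extensionality_dep => m.
      case: (classic (nu = m)) => [<-|h]; first by rewrite /= ein_same hxb.
      by rewrite /= ein_other // /z (g_mul0 (G m)).
    by move=> /(f_equal (fun f => f nu)); rewrite ein_same.
move=> x; apply: Jc => n F eps heps.
have dens : forall n (x : car P), exists y : car P, J y /\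
    forall k, (k < n)%N -> y (projT1 (F k)) = x (projT1 (F k)).
  elim => [|n' IH] x0; first by exists z; split.
  have [y [Jy hy]] := IH x0.
  set nu := projT1 (F n').
  exists (Defs.add P y (ein z (Defs.add (A nu) (x0 nu) (Defs.opp (A nu) (y nu))))).
  split; first by apply: JD => //; apply: key.
  move=> k; rewrite ltnS leq_eqVlt => /orP [/eqP ->| hk].
  - by rewrite /= -/nu ein_same (g_addKr (G nu)).
  - rewrite /=; case: (classic (nu = projT1 (F k))) => [e|hne].
      move: (hy k hk); rewrite -e => ->; rewrite ein_same.
      by rewrite (g_addKr (G nu)).
    by rewrite ein_other // /z (g_addr0 (G _)) hy.
have [y [Jy hy]] := dens n x.
exists y; split => // k hk.
by rewrite /= hy // (g_addrN (G _)) (g_sn0 (G _)).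
Qed.

Lemma part2 : leftP' P -> forall nu, leftP' (A nu).
Proof.
move=> HP nu Jn [[J0 JD JZ] JM] Jc Jr a.
pose J := fun x : car P => Jn (x nu).
have hJ : is_full_set J.
  apply: HP.
  - split; [split|] => //.
    + by move=> x y; apply: JD.
    + by move=> c x; apply: JZ.
    + by move=> b x; apply: JM.
  - move=> x Hx; apply: Jc => n Gk eps heps.
    have [y [Jy hy]] := Hx n (fun k => existT _ nu (Gk k)) eps heps.
    by exists (y nu); split => // k hk; exact: (hy k hk).
  - move=> x; split; last first.
      by move=> -> s _; apply: functional_extensionality_dep => m; apply: (g_mul0 (G m)).
    move=> hx; apply: functional_extensionality_dep => m.
    case: (classic (nu = m)) => [<-|hne].
    + apply/(Jr (x nu)) => s hs.
      have hJs : J (ein z s) by rewrite /J ein_same.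
      have := f_equal (fun f => f nu) (hx (ein z s) hJs).
      by rewrite /= ein_same.
    + apply: (g_faith (G m)) => b.
      have hJb : J (ein z b).
        rewrite /J ein_other; [exact: J0 | exact: nesym hne].
      have := f_equal (fun f => f m) (hx (ein z b) hJb).
      by rewrite /= ein_same.
by have := hJ (ein z a); rewrite /J ein_same.
Qed.

End Main.

Theorem proposition3p28 (R : realType) (L : Type) (A : L -> alg_data R) :
  (forall nu, is_locally_Cstar (A nu)) ->
  (annihilator_algebra (prod_alg A) <-> forall nu, annihilator_algebra (A nu)).
Proof.
move=> H.
have G nu : good (A nu) by case: (good_lc_aux (H nu)).
have Gop nu : good (opA (A nu)) by case: (good_lc_aux (H nu)).
have GP := good_prod G.
have GPop := good_prod Gop.
split.
- move=> [l r] nu; split.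
  + apply/(leftP_iff (G nu)); apply: (part2 G); exact/(leftP_iff GP).
  + have r' : leftP (prod_alg (fun nu => opA (A nu))) := r.
    have : leftP (opA (A nu)).
      apply/(leftP_iff (Gop nu)); apply: (part2 Gop); exact/(leftP_iff GPop).
    exact.
- move=> h; split.
  + apply/(leftP_iff GP); apply: (part1 G) => nu.
    by apply/(leftP_iff (G nu)); case: (h nu).
  + have hr : leftP (prod_alg (fun nu => opA (A nu))).
      apply/(leftP_iff GPop); apply: (part1 Gop) => nu.
      by apply/(leftP_iff (Gop nu)); case: (h nu).
    exact: hr.
Qed.
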